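(* For entitlements $e_1,\dots,e_n>0$ with $\sum_ie_i=1$ and any reported demands $d_1,\dots,d_n\ge0$, if $d_i<e_i$ then the MMF allocation to agent $i$ equals $d_i$.
   Context: MMF$(e,d)$: set $r=1$, $E=1$, $S=\{1,\dots,n\}$, $a=0$; process agents $j$ in ascending order of $d_j/e_j$; if $d_j<re_j/E$, set $a_j=d_j$, remove $j$ from $S$, $r\leftarrow r-d_j$, $E\leftarrow E-e_j$ and continue; otherwise set $a_k=re_k/E$ for all $k\in S$ and stop; output $a$. *)

(* Defs.v *)
From mathcomp Require Import all_boot all_order all_algebra.
Set Implicit Arguments. Unset Strict Implicit. Unset Printing Implicit Defensive.
Import Order.TTheory GRing.Theory Num.Theory.
Local Open Scope ring_scope.

(* The MMF(e,d) procedure, run along a processing order [s] (a sequence of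
   the still-unprocessed agents, i.e. the current set S listed in the order
   they are processed).  [r] is the remaining resource, [E] the remaining
   entitlement. *)
Fixpoint mmf_loop (R : realFieldType) (n : nat) (e d : 'I_n -> R)
    (s : seq 'I_n) (r E : R) : 'I_n -> R :=
  match s with
  | [::] => fun _ => 0
  | j :: s' =>
      if d j < r * e j / E then
        (fun k => if k == j then d j else mmf_loop e d s' (r - d j) (E - e j) k)
      else
        (fun k => if k \in j :: s' then r * e k / E else 0)
  end.

Definition MMF (R : realFieldType) (n : nat) (e d : 'I_n -> R)
    (s : seq 'I_n) : 'I_n -> R := mmf_loop e d s 1 1.

Definition mmf_order (R : realFieldType) (n : nat) (e d : 'I_n -> R)
    (s : seq 'I_n) : Prop :=
  perm_eq s (enum 'I_n) /\ sorted (fun i j => d i / e i <= d j / e j) s.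

(* Main.v *)
Require Import Defs.
From mathcomp Require Import all_boot all_order all_algebra.
Import Order.TTheory GRing.Theory Num.Theory.
Local Open Scope ring_scope.

Lemma loop_ok (R : realFieldType) (n : nat) (e d : 'I_n -> R) (i : 'I_n) :
  (forall j, 0 < e j) -> d i < e i ->
  forall s r E, i \in s -> E = \sum_(j <- s) e j -> E <= r ->
  sorted (fun i j => d i / e i <= d j / e j) s ->
  mmf_loop e d s r E i = d i.
Proof.
move=> ep di s; elim: s => [|j s IH] r E //= ins HE Er srt.
have Epos : 0 < E.
  rewrite HE; move: (j :: s) ins; elim=> [|k t IHt] //=.
  rewrite inE big_cons => /orP [/eqP<-|/IHt h].
    by rewrite ltr_wpDr // sumr_ge0 // => x _; apply/ltW.
  by rewrite ltr_wpDl // ltW.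
have key : forall k, d k < e k -> d k < r * e k / E.
  move=> k dk; apply: (lt_le_trans dk).
  rewrite ler_pdivlMr // mulrC ler_wpM2r //; exact/ltW.
case: (eqVneq i j) => [<-|nij].
  by rewrite key // eqxx.
move: ins; rewrite inE (negbTE nij) /= => ins.
have pth : all (fun k => d j / e j <= d k / e k) s.
  apply: order_path_min srt => a b c; exact: le_trans.
have dj : d j / e j <= d i / e i by move/allP: pth; apply.
have dje : d j < e j.
  have : d j / e j < 1.
    apply: (le_lt_trans dj); by rewrite ltr_pdivrMr // mul1r.
  by rewrite ltr_pdivrMr // mul1r.
rewrite key // (negbTE nij).
apply: IH => //.
- by rewrite HE big_cons addrAC subrr add0r.
- by rewrite lerD // lerN2 ltW.
- exact: path_sorted srt.
Qed.

Theorem mainTheorem12 (R : realFieldType) (n : nat) (e d : 'I_n -> R)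
    (s : seq 'I_n) (i : 'I_n) :
  (forall j, 0 < e j) ->
  \sum_(j < n) e j = 1 ->
  (forall j, 0 <= d j) ->
  mmf_order e d s ->
  d i < e i ->
  MMF e d s i = d i.
Proof.
move=> ep se _ [pe srt] di; rewrite /MMF.
apply: loop_ok => //.
- by rewrite (perm_mem pe) mem_enum.
- by rewrite -se (perm_big _ pe) /= big_enum.
Qed.
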